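(* Let $L\ge1$ and let $a_{-L-1},\dots,a_{L}$ be positive reals. On the open set of $(x_{-L},\dots,x_{-1},E,x_1,\dots,x_L)\in\mathbb R^{2L+1}$ with all $x_j\ne0$, define $F_L(x_{-L},\dots,x_{-1},E,x_1,\dots,x_L)=(b_{-L},\dots,b_L)$ by $$b_n=\begin{cases}E-a_{n-1}x_{n-1}^{-1}-a_nx_n,& -L\le n<0,\\ E-a_{-1}x_{-1}^{-1}-a_0x_1^{-1},& n=0,\\ E-a_nx_{n+1}^{-1}-a_{n-1}x_n,& 0<n\le L,\end{cases}$$ with the convention $x_{-L-1}^{-1}=x_{L+1}^{-1}=0$. Then the absolute value of the Jacobian determinant of $F_L$ equals $$\Big(\prod_{n=-L}^{L-1}a_n\Big)\Big(1+\sum_{j=1}^{L}\prod_{i=1}^{j}x_i^{-2}+\sum_{j=1}^{L}\prod_{i=1}^{j}x_{-i}^{-2}\Big).$$ Moreover, if $u=(u(-L),\dots,u(L))$ is a normalized ($\sum|u(n)|^2=1$) real eigenvector, with all entries nonzero, of the tridiagonal matrix with diagonal $b_{-L},\dots,b_L$ and off-diagonal entries $a_{-L},\dots,a_{L-1}$, with eigenvalue $E$, and $x_n=u(n+1)/u(n)$ for $n<0$, $x_n=u(n-1)/u(n)$ for $n>0$, then this Jacobian equals $\big(\prod_{n=-L}^{L-1}a_n\big)u(0)^{-2}$, and $F_L(x_{-L},\dots,x_{-1},E,x_1,\dots,x_L)=(b_{-L},\dots,b_L)$. *)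

(* Defs.v *)
From HB Require Import structures.
From Stdlib Require Import Reals ZArith ClassicalEpsilon FunctionalExtensionality.
From mathcomp Require Import all_boot all_order all_algebra.

Set Implicit Arguments.
Unset Strict Implicit.
Unset Printing Implicit Defensive.

Delimit Scope Z_scope with Z.
Delimit Scope R_scope with R.
Local Open Scope R_scope.

Definition Req_bool (x y : R) : bool := if Req_EM_T x y then true else false.

Lemma Req_boolP : Equality.axiom Req_bool.
Proof. by move=> x y; rewrite /Req_bool; case: Req_EM_T => h; constructor. Qed.

HB.instance Definition _ := hasDecEq.Build R Req_boolP.

Definition R_find (P : pred R) (n : nat) : option R :=
  if excluded_middle_informative (exists x, P x)
  then Some (epsilon (inhabits R0) (fun x => P x)) else None.

Lemma R_find_correct (P : pred R) n x : R_find P n = Some x -> P x.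
Proof.
rewrite /R_find; case: excluded_middle_informative => // h [<-].
exact: (epsilon_spec (inhabits R0) (fun x => P x) h).
Qed.

Lemma R_find_complete (P : pred R) : (exists x, P x) -> exists n, R_find P n.
Proof. by move=> h; exists 0%N; rewrite /R_find; case: excluded_middle_informative. Qed.

Lemma R_find_ext (P Q : pred R) : P =1 Q -> R_find P =1 R_find Q.
Proof.
move=> e n; have -> : P = Q by apply: functional_extensionality.
by [].
Qed.

HB.instance Definition _ := hasChoice.Build R R_find_correct R_find_complete R_find_ext.

Lemma R_addA : associative Rplus. Proof. by move=> x y z; rewrite Rplus_assoc. Qed.
Lemma R_addC : commutative Rplus. Proof. exact: Rplus_comm. Qed.
Lemma R_add0 : left_id R0 Rplus. Proof. exact: Rplus_0_l. Qed.
Lemma R_addN : left_inverse R0 Ropp Rplus. Proof. exact: Rplus_opp_l. Qed.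

HB.instance Definition _ := GRing.isZmodule.Build R R_addA R_addC R_add0 R_addN.

Lemma R_mulA : associative Rmult. Proof. by move=> x y z; rewrite Rmult_assoc. Qed.
Lemma R_mulC : commutative Rmult. Proof. exact: Rmult_comm. Qed.
Lemma R_mul1 : left_id R1 Rmult. Proof. exact: Rmult_1_l. Qed.
Lemma R_mulDl : left_distributive Rmult Rplus. Proof. by move=> x y z; rewrite Rmult_plus_distr_r. Qed.
Lemma R_one_neq0 : R1 != R0.
Proof. by apply/Req_boolP; exact: R1_neq_R0. Qed.

HB.instance Definition _ :=
  GRing.Zmodule_isComNzRing.Build R R_mulA R_mulC R_mul1 R_mulDl R_one_neq0.

(* Sites n in {-L,...,L} are represented by integers; the 2L+1 coordinates of
   R^{2L+1} are indexed by k : 'I_(2L+1), corresponding to site n = k - L. *)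
Definition zidx (L : nat) (k : 'I_((2 * L + 1)%N)) : Z := Z.sub (Z.of_nat k) (Z.of_nat L).

(* x_m^{-1}, with the convention x_{-L-1}^{-1} = x_{L+1}^{-1} = 0 *)
Definition inv_cut (L : nat) (p : Z -> R) (m : Z) : R :=
  if (Z.abs m <=? Z.of_nat L)%Z then Rinv (p m) else R0.

(* A point of R^{2L+1} is p : Z -> R with p n = x_n (n <> 0) and p 0 = E.
   FL L a p n is the n-th component b_n of F_L(p). *)
Definition FL (L : nat) (a : Z -> R) (p : Z -> R) (n : Z) : R :=
  if (n <? 0)%Z then
    (p 0%Z - a (n - 1)%Z * inv_cut L p (n - 1)%Z - a n * p n)
  else if (n =? 0)%Z then
    (p 0%Z - a (-1)%Z * Rinv (p (-1)%Z) - a 0%Z * Rinv (p 1%Z))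
  else
    (p 0%Z - a n * inv_cut L p (n + 1)%Z - a (n - 1)%Z * p n).

Definition upd (p : Z -> R) (m : Z) (t : R) : Z -> R :=
  fun k => if Z.eq_dec k m then t else p k.

Definition is_jacobian (L : nat) (a : Z -> R) (p : Z -> R)
    (J : 'M[R]_((2 * L + 1)%N)) : Prop :=
  forall i j : 'I_((2 * L + 1)%N),
    derivable_pt_lim (fun t => FL L a (upd p (zidx j) t) (zidx i))
                     (p (zidx j)) (J i j).

Local Open Scope ring_scope.
Definition detR (n : nat) (J : 'M[R]_n) : R := \det J.

Definition tridiag (L : nat) (a b : Z -> R) : 'M[R]_((2 * L + 1)%N) :=
  \matrix_(i, j)
    if i == j then b (zidx i)
    else if (j == i.+1 :> nat) then a (zidx i)
    else if (i == j.+1 :> nat) then a (zidx j)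
    else R0.

Definition zcol (L : nat) (u : Z -> R) : 'cV[R]_((2 * L + 1)%N) :=
  \col_i u (zidx i).

Definition is_eigvec (L : nat) (a b u : Z -> R) (E : R) : Prop :=
  tridiag L a b *m zcol L u = E *: zcol L u.

Local Open Scope R_scope.
Definition pt_of_u (u : Z -> R) (E : R) : Z -> R :=
  fun n => if (n <? 0)%Z then (u (n + 1)%Z / u n)
           else if (n =? 0)%Z then E
           else (u (n - 1)%Z / u n).

Arguments zidx : clear implicits.
Arguments inv_cut : clear implicits.
Arguments FL : clear implicits.
Arguments is_jacobian : clear implicits.
Arguments tridiag : clear implicits.
Arguments zcol : clear implicits.
Arguments is_eigvec : clear implicits.
Arguments detR : clear implicits.

(* Main.v *)
Require Import Defs.
From HB Require Import structures.
From Stdlib Require Import Reals ZArith Lia Lra FunctionalExtensionality.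
From mathcomp Require Import all_boot all_order all_algebra.
From mathcomp Require Import zify.
Delimit Scope Z_scope with Z.
Delimit Scope R_scope with R.
Local Open Scope R_scope.

Lemma D_ext f g x l l' : (forall t, f t = g t) -> l = l' ->
  derivable_pt_lim f x l -> derivable_pt_lim g x l'.
Proof.
move=> e <-; have -> : g = f by apply: functional_extensionality => t; rewrite e.
by [].
Qed.

Lemma D_cst c x : derivable_pt_lim (fun _ => c) x 0.
Proof. exact: (derivable_pt_lim_const c x). Qed.

Lemma D_id x : derivable_pt_lim (fun t => t) x 1.
Proof. exact: (derivable_pt_lim_id x). Qed.

Lemma D_inv x : x <> 0 -> derivable_pt_lim (fun t => / t) x (- / x ^ 2).
Proof.
move=> hx.
have h := derivable_pt_lim_div (fct_cte 1) id x 0 1 (derivable_pt_lim_const 1 x)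
  (derivable_pt_lim_id x) hx.
apply: (@D_ext _ _ _ _ _ _ _ h).
- by move=> t; rewrite /div_fct /fct_cte /id /Rdiv Rmult_1_l.
- rewrite /fct_cte /id /Rsqr; field; exact hx.
Qed.

Lemma D_minus f g x l1 l2 : derivable_pt_lim f x l1 -> derivable_pt_lim g x l2 ->
  derivable_pt_lim (fun t => f t - g t) x (l1 - l2).
Proof. move=> h1 h2; exact: (derivable_pt_lim_minus f g x l1 l2 h1 h2). Qed.

Lemma D_plus f g x l1 l2 : derivable_pt_lim f x l1 -> derivable_pt_lim g x l2 ->
  derivable_pt_lim (fun t => f t + g t) x (l1 + l2).
Proof. move=> h1 h2; exact: (derivable_pt_lim_plus f g x l1 l2 h1 h2). Qed.

Lemma D_scal c f x l : derivable_pt_lim f x l ->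
  derivable_pt_lim (fun t => c * f t) x (c * l).
Proof. move=> h; exact: (derivable_pt_lim_scal f c x l h). Qed.

Definition dI (k m : Z) : R := if (k =? m)%Z then 1 else 0.
Definition dV (p : Z -> R) (k m : Z) : R := if (k =? m)%Z then - / (p m) ^ 2 else 0.

Lemma D_upd p m k : derivable_pt_lim (fun t => upd p m t k) (p m) (dI k m).
Proof.
rewrite /upd /dI; case: Z.eq_dec => e.
- rewrite (proj2 (Z.eqb_eq _ _) e); exact: D_id.
- rewrite (proj2 (Z.eqb_neq _ _) e). cbn. exact: D_cst.
Qed.

Lemma D_inv_upd p m k : p k <> 0 ->
  derivable_pt_lim (fun t => / upd p m t k) (p m) (dV p k m).
Proof.
move=> hk; rewrite /upd /dV; case: Z.eq_dec => e.
- rewrite (proj2 (Z.eqb_eq _ _) e); subst; exact: D_inv.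
- rewrite (proj2 (Z.eqb_neq _ _) e). cbn. exact: D_cst.
Qed.

Definition Dval (L : nat) (a p : Z -> R) (n m : Z) : R :=
  if (n <? 0)%Z then
    dI 0 m - a (n - 1)%Z * (if (Z.abs (n - 1) <=? Z.of_nat L)%Z then dV p (n - 1) m else 0)
      - a n * dI n m
  else if (n =? 0)%Z then
    dI 0 m - a (-1)%Z * dV p (-1) m - a 0%Z * dV p 1 m
  else dI 0 m - a n * (if (Z.abs (n + 1) <=? Z.of_nat L)%Z then dV p (n + 1) m else 0)
      - a (n - 1)%Z * dI n m.

Lemma D_FL (L : nat) (a p : Z -> R) n m : (1 <= L)%N ->
  (forall k : Z, (1 <= Z.abs k <= Z.of_nat L)%Z -> p k <> 0) ->
  derivable_pt_lim (fun t => FL L a (upd p m t) n) (p m) (Dval L a p n m).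
Proof.
move=> hL hp; rewrite /FL /Dval /inv_cut.
case: Z.ltb_spec => hn.
  case: Z.leb_spec => hb.
    apply: D_minus; [apply: D_minus|apply: D_scal; exact: D_upd].
      exact: D_upd.
    apply: D_scal; apply: D_inv_upd; apply: hp; lia.
  apply: (@D_ext (fun t => upd p m t 0%Z - a (n - 1)%Z * 0 - a n * upd p m t n)) => //.
  apply: D_minus; [apply: D_minus|apply: D_scal; exact: D_upd].
    exact: D_upd.
  apply: D_scal; exact: D_cst.
case: Z.eqb_spec => hn0.
  apply: D_minus; [apply: D_minus|apply: D_scal; apply: D_inv_upd; apply: hp; lia].
    exact: D_upd.
  apply: D_scal; apply: D_inv_upd; apply: hp; lia.
case: Z.leb_spec => hb.
  apply: D_minus; [apply: D_minus|apply: D_scal; exact: D_upd].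
    exact: D_upd.
  apply: D_scal; apply: D_inv_upd; apply: hp; lia.
apply: (@D_ext (fun t => upd p m t 0%Z - a n * 0 - a (n - 1)%Z * upd p m t n)) => //.
apply: D_minus; [apply: D_minus|apply: D_scal; exact: D_upd].
  exact: D_upd.
apply: D_scal; exact: D_cst.
Qed.


Definition zn (L k : nat) : Z := (Z.of_nat k - Z.of_nat L)%Z.
Definition yv (L : nat) (p : Z -> R) (k : nat) : R := / p (zn L k) ^ 2.
Definition dd (L : nat) (a : Z -> R) (k : nat) : R :=
  if (k < L)%N then - a (zn L k) else if k == L then 1 else - a (zn L k - 1)%Z.
Definition fM (L : nat) (p : Z -> R) (i j : nat) : R :=
  if j == L then 1 else if j == i then 1
  else if (j.+1 == i) && (j < L)%N then - yv L p j
  else if (j == i.+1) && (L < j)%N then - yv L p j else 0.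

Ltac a_norm a := repeat match goal with
 | |- context [a ?x] => match goal with
     | |- context [a ?y] => assert_fails (constr_eq x y);
       let H := fresh in assert (H : a x = a y) by (f_equal; lia); rewrite H; clear H end end.

Ltac brute := repeat match goal with
 | |- context [ (?x <? ?y)%Z ] => destruct (Z.ltb_spec x y)
 | |- context [ (?x =? ?y)%Z ] => destruct (Z.eqb_spec x y)
 | |- context [ (?x <=? ?y)%Z ] => destruct (Z.leb_spec x y)
 | |- context [ @eq_op _ ?x ?y ] => case: (@eqP _ x y) => ?
 | |- context [ leq ?x ?y ] => case: (leqP x y) => ?
 end.

Lemma Dval_fM L a p i j : (1 <= L)%N -> (i < 2 * L + 1)%N -> (j < 2 * L + 1)%N ->
  Dval L a p (zn L i) (zn L j) = fM L p i j * dd L a j.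
Proof.
move=> hL hi hj.
rewrite /Dval /fM /dd /yv /dI /dV.
set m := zn L j. have hm : m = (Z.of_nat j - Z.of_nat L)%Z by [].
set n := zn L i. have hn : n = (Z.of_nat i - Z.of_nat L)%Z by [].
clearbody m n.
brute => /=; try (exfalso; lia); a_norm a; try ring.
Qed.

From mathcomp Require Import ring.
Import GRing.Theory.
Delimit Scope Z_scope with Z.
Delimit Scope R_scope with R.
Local Open Scope ring_scope.

Lemma sum_pt n (F : nat -> R) a :
  \sum_(0 <= k < n) F k = (if (a < n)%N then F a else 0) + \sum_(0 <= k < n) (if k == a then 0 else F k).
Proof.
elim: n => [|n IH]; first by rewrite !big_geq // add0r.
rewrite !big_nat_recr //= IH.
case: (eqVneq n a) => [->|hna].
  by rewrite ltnn ltnSn add0r addr0 addrC.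
rewrite [(a < n.+1)%N]ltnS [(a <= n)%N]leq_eqVlt (eq_sym a n) (negbTE hna) /= -addrA.
by rewrite addrA.
Qed.

Lemma mulmx_fun n (f g : nat -> nat -> R) (i j : 'I_n) :
  ((\matrix_(i0 < n, j0 < n) f i0 j0) *m (\matrix_(i0 < n, j0 < n) g i0 j0)) i j
  = \sum_(0 <= k < n) f i k * g k j.
Proof.
rewrite !mxE big_mkord; apply: eq_bigr => k _; by rewrite !mxE.
Qed.

Definition fNL (L : nat) (p : Z -> R) (i k : nat) : R :=
  if k == i then 1 else if (k.+1 == i) && (k < L)%N then - yv L p k else 0.
Definition fNU (L : nat) (p : Z -> R) (i k : nat) : R :=
  if k == i then 1 else if (k == i.+1) && (L < k)%N then - yv L p k else 0.
Definition Lf (L : nat) (p : Z -> R) (k : nat) : R :=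
  \sum_(0 <= j < k.+1) \prod_(j <= l < k) yv L p l.
Definition Rr (L : nat) (p : Z -> R) (k : nat) : R :=
  \sum_(k <= j < 2 * L + 1) \prod_(k.+1 <= l < j.+1) yv L p l.
Definition fw (L : nat) (p : Z -> R) (i : nat) : R :=
  if (i < L)%N then Lf L p i else if i == L then Lf L p L + yv L p L.+1 * Rr L p L.+1
  else Rr L p i.
Definition fv (L : nat) (p : Z -> R) (i : nat) : R :=
  if (i <= L)%N then Lf L p i else 1.
Definition fB (L : nat) (p : Z -> R) (i k : nat) : R :=
  if k == L then fw L p i else if k == i then 1 else 0.
Definition fC (L : nat) (p : Z -> R) (i k : nat) : R :=
  if k == L then fv L p i else fNU L p i k.

Lemma Lf0 L p : Lf L p 0 = 1.
Proof. by rewrite /Lf big_nat1 big_geq. Qed.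

Lemma LfS L p k : Lf L p k.+1 = 1 + yv L p k * Lf L p k.
Proof.
rewrite /Lf big_nat_recr //= (big_geq (leqnn k.+1)) addrC; congr (_ + _).
rewrite big_distrr; apply: eq_big_nat => j /andP [_ hj].
by rewrite big_nat_recr //= mulrC.
Qed.

Lemma RrS L p k : (k.+1 < 2 * L + 1)%N -> Rr L p k = 1 + yv L p k.+1 * Rr L p k.+1.
Proof.
move=> hk; rewrite /Rr big_ltn ?(ltn_trans (ltnSn k) hk) // big_geq //; congr (_ + _).
rewrite big_distrr; apply: eq_big_nat => j /andP [hj _].
by rewrite big_ltn.
Qed.

Lemma Rr_last L p : Rr L p (2 * L) = 1.
Proof. by rewrite /Rr addn1 big_nat1 big_geq. Qed.

Ltac f_norm f := repeat match goal with
 | |- context [f ?x] => match goal with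
     | |- context [f ?y] => assert_fails (constr_eq x y);
       let H := fresh in assert (H : f x = f y) by (f_equal; lia); rewrite H; clear H end end.

Ltac nbrute := repeat match goal with
 | |- context [ @eq_op _ ?x ?y ] => case: (@eqP _ x y) => ?
 | |- context [ leq ?x ?y ] => case: (leqP x y) => ?
 end.
Definition fMr (L : nat) (p : Z -> R) (i j : nat) : R :=
  if j == L then 1 else if j == i then 1
  else if (j.+1 == i) && (j < L)%N then - yv L p j
  else if (j == i.+1) && (L < j)%N then - yv L p j else 0.
Lemma fM_eq L p i j : fM L p i j = fMr L p i j.
Proof. by []. Qed.
Definition ddr (L : nat) (a : Z -> R) (k : nat) : R :=
  if (k < L)%N then - a (zn L k) else if k == L then 1 else - a (zn L k - 1)%Z.
Lemma dd_eq L a k : dd L a k = ddr L a k.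
Proof. by []. Qed.

Notation mx L f := (\matrix_(i < 2 * L + 1, j < 2 * L + 1) f (i : nat) (j : nat) : 'M[R]_(2 * L + 1)).

Lemma fact_a L p : (1 <= L)%N -> mx L (fMr L p) = mx L (fNL L p) *m mx L (fC L p).
Proof.
move=> hL; apply/matrixP => i j; rewrite mulmx_fun mxE.
have hj := ltn_ord j.
case: i => [[|i] hi] /=.
  rewrite (sum_pt _ _ 0%N) big1 => [|k _]; last first.
    rewrite /fNL; nbrute; (try by []); try (exfalso; lia); by rewrite mul0r.
  rewrite /fMr /fNL /fC /fv /fNU Lf0; nbrute => /=; (try (exfalso; lia)); f_norm (yv L p); ring.
rewrite (sum_pt _ _ i.+1) (sum_pt _ _ i) big1 => [|k _]; last first.
  rewrite /fNL; nbrute; (try by []); try (exfalso; lia); by rewrite mul0r.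
rewrite /fMr /fNL /fC /fv /fNU LfS; nbrute => /=; (try (exfalso; lia)); f_norm (yv L p); f_norm (Lf L p); ring.
Qed.

Lemma fact_b L p : (1 <= L)%N -> mx L (fC L p) = mx L (fNU L p) *m mx L (fB L p).
Proof.
move=> hL; apply/matrixP => i j; rewrite mulmx_fun mxE.
have hj := ltn_ord j; have hi := ltn_ord i.
rewrite (sum_pt _ _ i) (sum_pt _ _ i.+1) big1 => [|k _]; last first.
  rewrite /fNU; nbrute => /=; (try by []); try (exfalso; lia); by rewrite mul0r.
rewrite /fC /fB /fv /fw /fNU.
have [hi1|hi1] := ltnP i.+1 (2 * L + 1).
  rewrite (RrS L p i hi1).
  nbrute => /=; (try (exfalso; lia)); f_norm (yv L p); f_norm (Lf L p); f_norm (Rr L p); ring.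
have -> : (i : nat) = (2 * L)%N by lia.
rewrite Rr_last.
nbrute => /=; (try (exfalso; lia)); f_norm (yv L p); f_norm (Lf L p); f_norm (Rr L p); ring.
Qed.

Lemma det_NL L p : \det (mx L (fNL L p)) = 1.
Proof.
rewrite det_trig.
  by rewrite big1 // => i _; rewrite mxE /fNL eqxx.
apply/forallP => i; apply/forallP => j; apply/implyP => hij; apply/eqP; rewrite mxE /fNL.
nbrute => //=; exfalso; lia.
Qed.

Lemma det_NU L p : \det (mx L (fNU L p)) = 1.
Proof.
rewrite -det_tr det_trig.
  by rewrite big1 // => i _; rewrite !mxE /fNU eqxx.
apply/forallP => i; apply/forallP => j; apply/implyP => hij; apply/eqP; rewrite !mxE /fNU.
nbrute => //=; exfalso; lia.
Qed.

Lemma det_B L p : (1 <= L)%N -> \det (mx L (fB L p)) = fw L p L.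
Proof.
move=> hL.
have hLN : (L < 2 * L + 1)%N by lia.
rewrite (expand_det_row _ (Ordinal hLN)) (bigD1 (Ordinal hLN)) //= big1 => [|k hk]; last first.
  rewrite mxE /fB /=.
  have -> : (k : nat) == L = false.
    by apply/negbTE; apply: contra hk => /eqP e; apply/eqP; apply: val_inj.
  by rewrite mul0r.
rewrite mxE /fB /= eqxx addr0.
have -> : cofactor (mx L (fB L p)) (Ordinal hLN) (Ordinal hLN) = 1.
  rewrite /cofactor.
  have -> : row' (Ordinal hLN) (col' (Ordinal hLN) (mx L (fB L p))) = 1%:M.
    apply/matrixP => i j; rewrite !mxE /fB.
    have hl : (lift (Ordinal hLN) j : nat) != L.
      by have := neq_lift (Ordinal hLN) j; rewrite eq_sym.
    rewrite (negbTE hl); case: (eqVneq i j) => [->|ne]; first by rewrite eqxx.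
    rewrite (_ : (_ == _) = false) //; apply/negbTE; apply: contra ne => /eqP e.
    by apply/eqP; apply: (lift_inj (h := Ordinal hLN)); apply: val_inj.
  by rewrite det1 mulr1 /= -signr_odd addnn odd_double expr0.
by rewrite mulr1.
Qed.

Lemma det_M L p : (1 <= L)%N -> \det (mx L (fMr L p)) = fw L p L.
Proof.
move=> hL; rewrite fact_a // det_mulmx det_NL mul1r fact_b // det_mulmx det_NU mul1r.
exact: det_B.
Qed.

Lemma detJ L a p (J : 'M[R]_(2 * L + 1)) : (1 <= L)%N ->
  (forall i j : 'I_(2 * L + 1), J i j = Dval L a p (zn L i) (zn L j)) ->
  \det J = fw L p L * \prod_(j < 2 * L + 1) ddr L a j.
Proof.
move=> hL hJ.
have -> : J = mx L (fMr L p) *m diag_mx (\row_j ddr L a j).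
  apply/matrixP => i j; rewrite mul_mx_diag !mxE hJ Dval_fM //.
rewrite det_mulmx det_M // det_diag; congr (_ * _).
by apply: eq_bigr => j _; rewrite mxE.
Qed.


Lemma bigRplusE n (F : 'I_n -> R) : \big[Rplus/R0]_(i < n) F i = \sum_(i < n) F i.
Proof. by []. Qed.
Lemma bigRmultE n (F : 'I_n -> R) : \big[Rmult/R1]_(i < n) F i = \prod_(i < n) F i.
Proof. by []. Qed.

Lemma sum_shift (F : nat -> R) m n : \sum_(m <= i < m + n) F i = \sum_(i < n) F (m + i).
Proof.
rewrite -{1}(add0n m) big_addn addKn big_mkord; apply: eq_bigr => i _; by rewrite addnC.
Qed.
Lemma prod_shift (F : nat -> R) m n : \prod_(m <= i < m + n) F i = \prod_(i < n) F (m + i).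
Proof.
rewrite -{1}(add0n m) big_addn addKn big_mkord; apply: eq_bigr => i _; by rewrite addnC.
Qed.

Lemma claimA L p : yv L p L.+1 * Rr L p L.+1 =
  \big[Rplus/R0]_(j < L) \big[Rmult/R1]_(i < j.+1) (/ (p (Z.of_nat i.+1) ^ 2))%R.
Proof.
rewrite /Rr big_distrr bigRplusE.
have -> : (2 * L + 1 = L.+1 + L)%N by lia.
rewrite sum_shift; apply: eq_bigr => j _.
rewrite bigRmultE -(big_ltn (F := yv L p)); last by rewrite ltnS leq_addr.
rewrite -addnS prod_shift; apply: eq_bigr => i _.
rewrite /yv; congr (/ (p _ ^ 2))%R.
rewrite /zn; lia.
Qed.

Lemma claimB L p : Lf L p L =
  1 + \big[Rplus/R0]_(j < L) \big[Rmult/R1]_(i < j.+1) (/ (p (- Z.of_nat i.+1)%Z ^ 2))%R.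
Proof.
rewrite /Lf big_nat_recr // (big_geq (leqnn L)) addrC; congr (_ + _).
rewrite big_rev_mkord subn0 bigRplusE; apply: eq_bigr => k _.
have hk := ltn_ord k.
rewrite big_rev_mkord (subKn hk) bigRmultE; apply: eq_bigr => i _.
have hi := ltn_ord i.
rewrite /yv; congr (/ (p _ ^ 2))%R.
rewrite /zn; lia.
Qed.

Lemma yv_ge0 L p k : (0 <= yv L p k)%R.
Proof.
rewrite /yv; case: (Req_dec (p (zn L k)) 0%R) => [->|h].
  rewrite pow_i; last by lia.
  rewrite Rinv_0; exact: Rle_refl.
apply: Rlt_le; apply: Rinv_0_lt_compat.
have -> : (p (zn L k) ^ 2 = Rsqr (p (zn L k)))%R by rewrite /Rsqr /= Rmult_1_r.
exact: Rsqr_pos_lt.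
Qed.

Lemma prod_yv_ge0 L p (r : seq nat) (P : pred nat) : (0 <= \prod_(l <- r | P l) yv L p l)%R.
Proof.
apply: (big_ind (fun x => 0 <= x)%R); [exact: Rle_0_1 | |].
  by move=> x y hx hy; apply: Rmult_le_pos.
by move=> l _; apply: yv_ge0.
Qed.

Lemma fw_ge0 L p : (0 <= fw L p L)%R.
Proof.
rewrite /fw ltnn eqxx.
apply: Rplus_le_le_0_compat.
  rewrite /Lf; apply: (big_ind (fun x => 0 <= x)%R); [exact: Rle_refl | |].
    by move=> x y hx hy; apply: Rplus_le_le_0_compat.
  by move=> j _; apply: prod_yv_ge0.
apply: Rmult_le_pos; first exact: yv_ge0.
rewrite /Rr; apply: (big_ind (fun x => 0 <= x)%R); [exact: Rle_refl | |].
  by move=> x y hx hy; apply: Rplus_le_le_0_compat.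
by move=> j _; apply: prod_yv_ge0.
Qed.

Lemma Rabs_prod n (F : 'I_n -> R) : Rabs (\prod_(i < n) F i) = \prod_(i < n) Rabs (F i).
Proof.
apply: (big_morph Rabs (id1 := R1) (op1 := GRing.mul)).
  by move=> x y; rewrite Rabs_mult.
exact: Rabs_R1.
Qed.

Lemma prod_dd L a : (1 <= L)%N ->
  (forall n : Z, (- Z.of_nat L - 1 <= n <= Z.of_nat L)%Z -> (0 < a n)%R) ->
  Rabs (\prod_(j < 2 * L + 1) ddr L a j) =
  \big[Rmult/R1]_(k < 2 * L) a (Z.of_nat k - Z.of_nat L)%Z.
Proof.
move=> hL ha; rewrite Rabs_prod bigRmultE.
rewrite -(big_mkord (fun _ => true) (fun j => Rabs (ddr L a j))).
rewrite -(big_mkord (fun _ => true) (fun k => a (Z.of_nat k - Z.of_nat L)%Z)).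
rewrite (big_cat_nat _ (n := L)) ?leq0n //; last by lia.
rewrite [X in _ = X](big_cat_nat _ (n := L)) ?leq0n //; last by lia.
congr (_ * _).
  apply: eq_big_nat => j /andP [_ hj].
  rewrite /ddr hj Rabs_Ropp Rabs_pos_eq //; apply: Rlt_le; apply: ha; rewrite /zn; lia.
rewrite big_ltn; last by lia.
rewrite /ddr ltnn eqxx Rabs_R1 (_ : IZR (Zpos xH) = 1) // Monoid.mul1m.
have -> : (2 * L + 1 = L.+1 + L)%N by lia.
have -> : (2 * L = L + L)%N by lia.
rewrite prod_shift prod_shift; apply: eq_bigr => i _.
have hi := ltn_ord i.
have h1 : (L.+1 + i < L)%N = false by lia.
have h2 : (L.+1 + i == L) = false by lia.
rewrite h1 h2 Rabs_Ropp Rabs_pos_eq; last by apply: Rlt_le; apply: ha; rewrite /zn; lia.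
congr (a _); rewrite /zn; lia.
Qed.

Definition Jmat L a p : 'M[R]_(2 * L + 1) := \matrix_(i, j) Dval L a p (zidx L i) (zidx L j).
Local Close Scope ring_scope.
Local Open Scope R_scope.

Lemma RplusE : Rplus = (@GRing.add R). Proof. by []. Qed.
Lemma RmultE : Rmult = (@GRing.mul R). Proof. by []. Qed.

Lemma part1 (L : nat) (a : Z -> R) :
  (1 <= L)%N ->
  (forall n : Z, (- Z.of_nat L - 1 <= n <= Z.of_nat L)%Z -> (0 < a n)%R) ->
  (forall p : Z -> R,
     (forall n : Z, (1 <= Z.abs n <= Z.of_nat L)%Z -> p n <> 0) ->
     (exists J : 'M[R]_(2 * L + 1), is_jacobian L a p J) /\
     (forall J : 'M[R]_(2 * L + 1), is_jacobian L a p J ->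
        Rabs (detR _ J) =
        ((\big[Rmult/R1]_(k < 2 * L) a (Z.of_nat k - Z.of_nat L)%Z) *
        (1 + \big[Rplus/R0]_(j < L) \big[Rmult/R1]_(i < j.+1)
                 / (p (Z.of_nat i.+1) ^ 2)
           + \big[Rplus/R0]_(j < L) \big[Rmult/R1]_(i < j.+1)
                 / (p (- Z.of_nat i.+1)%Z ^ 2)))%R)).
Proof.
move=> hL ha p hp; split.
  exists (Jmat L a p) => i j; rewrite /Jmat mxE.
  exact: D_FL.
move=> J hJ.
have hJ' : forall i j : 'I_(2 * L + 1), J i j = Dval L a p (zn L i) (zn L j).
  move=> i j; apply: (uniqueness_limite _ _ _ _ (hJ i j)); exact: D_FL.
rewrite /detR (detJ _ _ _ _ hL hJ') Rabs_mult (Rabs_pos_eq _ (fw_ge0 L p)) (prod_dd _ _ hL ha).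
rewrite /fw ltnn eqxx claimB claimA.
set S1 := \big[Rplus/R0]_(j < L) _.
set S2 := \big[Rplus/R0]_(j < L) _.
set P := \big[Rmult/R1]_(k < 2 * L) _.
rewrite !RplusE !RmultE (_ : IZR (Zpos xH) = GRing.one _) //.
ring.
Qed.

Local Open Scope ring_scope.

Definition fT L (a b : Z -> R) (i k : nat) : R :=
  if i == k then b (zn L i) else if k == i.+1 then a (zn L i)
  else if i == k.+1 then a (zn L k) else 0.

Lemma eig_entry L a b u E : is_eigvec L a b u E -> forall i : 'I_(2 * L + 1),
  \sum_(0 <= k < 2 * L + 1) fT L a b i k * u (zn L k) = E * u (zn L i).
Proof.
move=> h i; have := congr1 (fun M : 'cV[R]_(2 * L + 1) => M i ord0) h.
rewrite !mxE => <-; rewrite big_mkord; apply: eq_bigr => k _; by rewrite !mxE.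
Qed.

Lemma eig_sum L a b u E (i : nat) : (i < 2 * L + 1)%N -> is_eigvec L a b u E ->
  b (zn L i) * u (zn L i) +
  (if (i.+1 < 2 * L + 1)%N then a (zn L i) * u (zn L i.+1) else 0) +
  (if (0 < i)%N then a (zn L i.-1) * u (zn L i.-1) else 0) = E * u (zn L i).
Proof.
move=> hi h; rewrite -(eig_entry _ _ _ _ _ h (Ordinal hi)) /=.
case: i hi => [|i] hi.
  rewrite (sum_pt _ _ 0%N) (sum_pt _ _ 1%N) big1 => [|k _]; last first.
    rewrite /fT; nbrute => /=; (try by []); try (exfalso; lia); by rewrite mul0r.
  rewrite /fT hi /=; nbrute => /=; (try (exfalso; lia)); ring.
rewrite (sum_pt _ _ i.+1) (sum_pt _ _ i.+2) (sum_pt _ _ i) big1 => [|k _]; last first.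
  rewrite /fT; nbrute => /=; (try by []); try (exfalso; lia); by rewrite mul0r.
rewrite /fT hi /=; nbrute => /=; (try (exfalso; lia)); ring.
Qed.

Lemma norm_split L (g : Z -> R) :
  \sum_(k < 2 * L + 1) g (zidx L k) =
  g 0%Z + \sum_(j < L) g (Z.of_nat j.+1) + \sum_(j < L) g (- Z.of_nat j.+1)%Z.
Proof.
rewrite -(big_mkord (fun _ => true) (fun k => g (zn L k))).
rewrite (big_cat_nat _ (n := L)) ?leq0n //; last by lia.
rewrite big_rev_mkord subn0 big_ltn; last by lia.
have -> : (2 * L + 1 = L.+1 + L)%N by lia.
rewrite sum_shift.
have -> : zn L L = 0%Z by rewrite /zn; lia.
rewrite [RHS]addrC; apply: (f_equal2 (@GRing.add _)).
  by apply: eq_bigr => j _; have hj := ltn_ord j; congr (g _); rewrite /zn; lia.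
apply: (f_equal2 (@GRing.add _)) => //.
by apply: eq_bigr => j _; have hj := ltn_ord j; congr (g _); rewrite /zn; lia.
Qed.

From Stdlib Require Import Ring Field.
Delimit Scope Z_scope with Z.
Delimit Scope R_scope with R.
Local Close Scope ring_scope.
Local Open Scope R_scope.

Lemma Rmul1r' : left_id R1 Rmult. Proof. exact: Rmult_1_l. Qed.
Lemma RmulA' : associative Rmult. Proof. by move=> x y z; rewrite Rmult_assoc. Qed.
Lemma RmulC' : commutative Rmult. Proof. exact: Rmult_comm. Qed.
HB.instance Definition _ := Monoid.isComLaw.Build R R1 Rmult RmulA' RmulC' Rmul1r'.
Lemma Radd0r' : left_id R0 Rplus. Proof. exact: Rplus_0_l. Qed.
Lemma RaddA' : associative Rplus. Proof. by move=> x y z; rewrite Rplus_assoc. Qed.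
Lemma RaddC' : commutative Rplus. Proof. exact: Rplus_comm. Qed.
HB.instance Definition _ := Monoid.isComLaw.Build R R0 Rplus RaddA' RaddC' Radd0r'.

Lemma eig_sumR L a b u E (i : nat) : (i < 2 * L + 1)%N -> is_eigvec L a b u E ->
  b (zn L i) * u (zn L i) +
  (if (i.+1 < 2 * L + 1)%N then a (zn L i) * u (zn L i.+1) else 0) +
  (if (0 < i)%N then a (zn L i.-1) * u (zn L i.-1) else 0) = E * u (zn L i).
Proof. exact: eig_sum. Qed.

Lemma norm_splitR L (g : Z -> R) :
  \big[Rplus/R0]_(k < 2 * L + 1) g (zidx L k) =
  g 0%Z + \big[Rplus/R0]_(j < L) g (Z.of_nat j.+1) + \big[Rplus/R0]_(j < L) g (- Z.of_nat j.+1)%Z.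
Proof. exact: norm_split. Qed.

Lemma tele (f : nat -> R) m : (forall i, (i <= m)%N -> f i <> 0) ->
  \big[Rmult/R1]_(i < m) / (f i / f i.+1) ^ 2 = (f m / f 0%N) ^ 2.
Proof.
elim: m => [|m IH] hf.
  rewrite big_ord0 /=; field; apply: hf; lia.
rewrite big_ord_recr /= IH; last by move=> i hi; apply: hf; lia.
field; split; [apply: hf; lia | split; apply: hf; lia].
Qed.

Lemma sum_scale n (G : 'I_n -> R) c :
  \big[Rplus/R0]_(j < n) (G j * c) = \big[Rplus/R0]_(j < n) G j * c.
Proof.
elim: n G => [|n IH] G; first by rewrite !big_ord0 Rmult_0_l.
by rewrite !big_ord_recr /= IH Rmult_plus_distr_r.
Qed.

Lemma bracket L u E : (1 <= L)%N ->
  \big[Rplus/R0]_(k < 2 * L + 1) (u (zidx L k)) ^ 2 = 1 ->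
  (forall n : Z, (Z.abs n <= Z.of_nat L)%Z -> u n <> 0) ->
  1 + \big[Rplus/R0]_(j < L) \big[Rmult/R1]_(i < j.+1) / (pt_of_u u E (Z.of_nat i.+1) ^ 2)
    + \big[Rplus/R0]_(j < L) \big[Rmult/R1]_(i < j.+1) / (pt_of_u u E (- Z.of_nat i.+1)%Z ^ 2)
  = / (u 0%Z ^ 2).
Proof.
move=> hL hnorm hu.
have hu0 : u 0%Z <> 0 by apply: hu; lia.
have e1 : forall j : 'I_L, \big[Rmult/R1]_(i < j.+1) / (pt_of_u u E (Z.of_nat i.+1) ^ 2)
    = u (Z.of_nat j.+1) ^ 2 * / u 0%Z ^ 2.
  move=> j; have hj := ltn_ord j.
  rewrite (eq_bigr (fun i : 'I_j.+1 => / (u (Z.of_nat i) / u (Z.of_nat i.+1)) ^ 2)); last first.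
    move=> i _; have hi := ltn_ord i.
    rewrite /pt_of_u; case: Z.ltb_spec => h1; first lia.
    case: Z.eqb_spec => h2; first lia.
    congr (/ (_ / _) ^ 2); congr u; lia.
  rewrite (tele (fun k => u (Z.of_nat k))); last by move=> k hk; apply: hu; lia.
  rewrite /=; field; exact: hu0.
have e2 : forall j : 'I_L, \big[Rmult/R1]_(i < j.+1) / (pt_of_u u E (- Z.of_nat i.+1)%Z ^ 2)
    = u (- Z.of_nat j.+1)%Z ^ 2 * / u 0%Z ^ 2.
  move=> j; have hj := ltn_ord j.
  rewrite (eq_bigr (fun i : 'I_j.+1 => / (u (- Z.of_nat i)%Z / u (- Z.of_nat i.+1)%Z) ^ 2)); last first.
    move=> i _; have hi := ltn_ord i.
    rewrite /pt_of_u; case: Z.ltb_spec => h1; last lia.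
    congr (/ (_ / _) ^ 2); congr u; lia.
  rewrite (tele (fun k => u (- Z.of_nat k)%Z)); last by move=> k hk; apply: hu; lia.
  rewrite /=; field; exact: hu0.
rewrite (eq_bigr _ (fun j _ => e1 j)) (eq_bigr _ (fun j _ => e2 j)) !sum_scale.
move: hnorm; rewrite (norm_splitR L (fun z => u z ^ 2)) => hnorm.
set A := \big[Rplus/R0]_(j < L) u (Z.of_nat j.+1) ^ 2 in hnorm *.
set B := \big[Rplus/R0]_(j < L) u (- Z.of_nat j.+1)%Z ^ 2 in hnorm *.
have -> : A = 1 - u 0%Z ^ 2 - B by lra.
field; exact: hu0.
Qed.

Ltac f_normR f := repeat match goal with
 | |- context [f ?x] => match goal with
     | |- context [f ?y] => assert_fails (constr_eq x y);
       let H := fresh in assert (H : f x = f y) by (f_equal; lia); rewrite H; clear H end end.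

Lemma FL_b L a b u E n : (1 <= L)%N ->
  (forall n : Z, (Z.abs n <= Z.of_nat L)%Z -> u n <> 0) ->
  is_eigvec L a b u E -> (Z.abs n <= Z.of_nat L)%Z ->
  FL L a (pt_of_u u E) n = b n.
Proof.
move=> hL hu heig hn.
set i := Z.to_nat (n + Z.of_nat L).
have hi : (i < 2 * L + 1)%N by rewrite /i; lia.
have -> : n = zn L i by rewrite /zn /i; lia.
clearbody i.
have H := eig_sumR L a b u E i hi heig.
have hui : u (zn L i) <> 0 by apply: hu; rewrite /zn; lia.
have hb : b (zn L i) = E - (if (i.+1 < 2 * L + 1)%N then a (zn L i) * u (zn L i.+1) / u (zn L i) else 0)
   - (if (0 < i)%N then a (zn L i.-1) * u (zn L i.-1) / u (zn L i) else 0).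
  move: H; case: (i.+1 < 2 * L + 1)%N; case: (0 < i)%N => H;
  apply: (Rmult_eq_reg_r (u (zn L i))) => //; field_simplify => //; lra.
rewrite hb; clear H hb hui.
case: i hi => [|i] hi.
  rewrite /FL /pt_of_u /inv_cut /zn; brute; cbv beta iota; try (exfalso; lia);
  f_normR a; f_normR u; field; repeat split; apply: hu; lia.
rewrite /FL /pt_of_u /inv_cut /zn; brute; cbv beta iota; try (exfalso; lia);
f_normR a; f_normR u; field; repeat split; apply: hu; lia.
Qed.

Theorem mainTheorem9 (L : nat) (a : Z -> R) :
  (1 <= L)%N ->
  (forall n : Z, (- Z.of_nat L - 1 <= n <= Z.of_nat L)%Z -> 0 < a n) ->
  (forall p : Z -> R,
     (forall n : Z, (1 <= Z.abs n <= Z.of_nat L)%Z -> p n <> 0) ->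
     (exists J : 'M[R]_(2 * L + 1), is_jacobian L a p J) /\
     (forall J : 'M[R]_(2 * L + 1), is_jacobian L a p J ->
        Rabs (detR _ J) =
        (\big[Rmult/R1]_(k < 2 * L) a (Z.of_nat k - Z.of_nat L)%Z) *
        (1 + \big[Rplus/R0]_(j < L) \big[Rmult/R1]_(i < j.+1)
                 / (p (Z.of_nat i.+1) ^ 2)
           + \big[Rplus/R0]_(j < L) \big[Rmult/R1]_(i < j.+1)
                 / (p (- Z.of_nat i.+1)%Z ^ 2)))) /\
  (forall (u b : Z -> R) (E : R),
     \big[Rplus/R0]_(k < 2 * L + 1) (u (zidx L k)) ^ 2 = 1 ->
     (forall n : Z, (Z.abs n <= Z.of_nat L)%Z -> u n <> 0) ->
     is_eigvec L a b u E ->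
     (forall J : 'M[R]_(2 * L + 1), is_jacobian L a (pt_of_u u E) J ->
        Rabs (detR _ J) =
        (\big[Rmult/R1]_(k < 2 * L) a (Z.of_nat k - Z.of_nat L)%Z) * / (u 0%Z ^ 2)) /\
     (forall n : Z, (Z.abs n <= Z.of_nat L)%Z -> FL L a (pt_of_u u E) n = b n)).
Proof.
move=> hL ha; split; first exact: (part1 L a hL ha).
move=> u b E hnorm hu heig; split.
  move=> J hJ.
  have hp : forall n : Z, (1 <= Z.abs n <= Z.of_nat L)%Z -> pt_of_u u E n <> 0.
    move=> n hn; rewrite /pt_of_u.
    case: Z.ltb_spec => h1.
      apply: Rmult_integral_contrapositive_currified; first (apply: hu; lia).
      apply: Rinv_neq_0_compat; apply: hu; lia.
    case: Z.eqb_spec => h2; first lia.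
    apply: Rmult_integral_contrapositive_currified; first (apply: hu; lia).
    apply: Rinv_neq_0_compat; apply: hu; lia.
  have [_ h] := part1 L a hL ha (pt_of_u u E) hp.
  by rewrite (h J hJ) (bracket L u E hL hnorm hu).
move=> n hn; exact: FL_b.
Qed.
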